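(* Let $r\geq 3$. If a graph $G$ of order $n$ contains a complete subgraph $K_{r+1}$ and has minimum degree $$\delta(G)>\left(\frac{r-1}{r}-\frac{1}{r^{2}(r^{2}-1)}\right)n,$$ then $$js^{(2,r+1,2)}(G)>\frac{n^{r-1}}{r^{r+3}}.$$
   Context: All graphs are finite and simple; $\delta(G)$ is the minimum degree. For an integer $r\geq 2$, $js^{(2,r+1,2)}(G)$ is the maximum, over all edges $uv$ of $G$, of the number of $(r+1)$-cliques of $G$ containing both $u$ and $v$ (and $0$ if $G$ has no edges). *)

(* Defs.v *)
From mathcomp Require Import all_boot all_order all_algebra.
Set Implicit Arguments. Unset Strict Implicit. Unset Printing Implicit Defensive.

Definition simple_graph (T : finType) (e : rel T) : Prop :=
  symmetric e /\ irreflexive e.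

Section Graph.
Variables (T : finType) (e : rel T).

Definition deg (v : T) : nat := #|[set w | e v w]|.

(* minimum degree delta(G) (for nonempty T; default #|T| for empty T) *)
Definition min_degree : nat := \big[minn/#|T|]_(v : T) deg v.

Definition is_clique (S : {set T}) : bool :=
  [forall x in S, forall y in S, (x != y) ==> e x y].

Definition has_clique (k : nat) : Prop :=
  exists S : {set T}, is_clique S /\ #|S| = k.

Definition cliques_through (k : nat) (u v : T) : nat :=
  #|[set S : {set T} | [&& is_clique S, #|S| == k, u \in S & v \in S]]|.

(* js^{(2,k,2)}(G) : max over edges uv of the number of k-cliques containing
   u and v; 0 if there is no edge. *)
Definition js2 (k : nat) : nat :=
  \max_(p : T * T | e p.1 p.2) cliques_through k p.1 p.2.

End Graph.

(* Main.v *)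
Require Import Defs.
From mathcomp Require Import all_boot all_order all_algebra.
From mathcomp Require Import ring lra zify.
Set Implicit Arguments. Unset Strict Implicit. Unset Printing Implicit Defensive.
Import Order.TTheory GRing.Theory Num.Theory.

Section Comb.
Variables (T : finType) (e : rel T).
Hypothesis esym : symmetric e.
Hypothesis eirr : irreflexive e.

Lemma cardEsum (A : {pred T}) : #|A| = \sum_i (i \in A : nat).
Proof. by rewrite -sum1_card big_mkcond; apply: eq_bigr => i _; case: (i \in A). Qed.

Lemma deg_min v : min_degree e <= deg e v.
Proof.
rewrite /min_degree.
have : v \in index_enum T by rewrite mem_index_enum.
elim: (index_enum T) => // a s IH; rewrite inE big_cons => /orP [/eqP <-|vs].
  exact: geq_minl.
by rewrite geq_min IH ?orbT.
Qed.

Lemma deg_le v : deg e v <= #|T|.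
Proof. exact: max_card. Qed.

Lemma clique_add (X : {set T}) w : is_clique e X ->
  (forall x, x \in X -> e x w) -> is_clique e (w |: X).
Proof.
move=> /forallP cX hw; apply/forallP => x; apply/implyP => /setU1P [->|xX];
  apply/forallP => y; apply/implyP => /setU1P [->|yX]; apply/implyP => neq.
- by rewrite eqxx in neq.
- by rewrite esym; apply: hw.
- exact: hw.
- by move: (cX x) => /implyP/(_ xX)/forallP/(_ y)/implyP/(_ yX)/implyP; apply.
Qed.

Lemma clique_edge S x y : is_clique e S -> x \in S -> y \in S -> x != y -> e x y.
Proof.
by move=> /forallP/(_ x)/implyP cS xS yS; move: (cS xS) => /forallP/(_ y)/implyP/(_ yS)/implyP.
Qed.

Definition cn (X W : {set T}) := [set w in W | [forall x in X, e x w]].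

Lemma cn_bound (W X : {set T}) : #|W| <= #|cn X W| + \sum_(x in X) (#|T| - deg e x).
Proof.
have -> : \sum_(x in X) (#|T| - deg e x) = \sum_w \sum_(x in X) (~~ e x w : nat).
  rewrite exchange_big; apply: eq_bigr => x _.
  rewrite /deg -(cardsC [set w | e x w]) addKn cardEsum; apply: eq_bigr => w _.
  by rewrite !inE.
rewrite !cardEsum -big_split leq_sum // => w _.
case wc: (w \in cn X W).
  by apply: leq_trans (leq_b1 _) _; apply: leq_addr.
case wW: (w \in W); last by [].
apply: leq_trans _ (leq_addl _ _).
have : ~~ [forall x in X, e x w] by move: wc; rewrite inE wW /= => ->.
rewrite negb_forall => /existsP [x]; rewrite negb_imply => /andP [xX nex].
by rewrite (bigD1 x) //= nex.
Qed.

Definition Ck (W : {set T}) k :=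
  [set X : {set T} | [&& X \subset W, is_clique e X & #|X| == k]].

Lemma sum_ind (I : finType) (A : {pred I}) (P : pred I) :
  \sum_(i in A) (P i : nat) = #|[set i | (i \in A) && P i]|.
Proof.
rewrite -sum1_card [RHS]big_mkcond [LHS]big_mkcond; apply: eq_bigr => i _.
by rewrite inE; case: (i \in A); case: (P i).
Qed.

Lemma Ck_step (W : {set T}) k : \sum_(X in Ck W k) #|cn X W| <= k.+1 * #|Ck W k.+1|.
Proof.
have -> : k.+1 * #|Ck W k.+1| = \sum_(Y in Ck W k.+1) #|Y|.
  rewrite mulnC -sum_nat_const; apply: eq_bigr => Y; rewrite inE.
  by case/and3P => _ _ /eqP.
rewrite (eq_bigr (fun X => \sum_w (w \in cn X W : nat))); last by move=> X _; apply: cardEsum.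
rewrite [X in _ <= X](eq_bigr (fun X : {set T} => \sum_w (w \in X : nat))); last by move=> X _; apply: cardEsum.
rewrite exchange_big [X in _ <= X]exchange_big leq_sum // => w _.
rewrite !sum_ind.
set A := [set X | _ && _].
set B := [set X | _ && _].
have winj : {in A &, injective (fun X => w |: X)}.
  move=> X1 X2; rewrite !inE => /andP [_ h1] /andP [_ h2] eq12.
  have n1 : w \notin X1.
    by apply/negP => wX; move: h1 => /andP [_ /forallP/(_ w)/implyP/(_ wX)]; rewrite eirr.
  have n2 : w \notin X2.
    by apply/negP => wX; move: h2 => /andP [_ /forallP/(_ w)/implyP/(_ wX)]; rewrite eirr.
  by rewrite -(setU1K n1) -(setU1K n2) eq12.
rewrite -(card_in_imset winj); apply: subset_leq_card; apply/subsetP => Y /imsetP [X XA ->].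
move: XA; rewrite !inE => /andP [/and3P [XW cX /eqP cardX]] /andP [wW /forallP hw].
have nwX : w \notin X.
  by apply/negP => wX; move: (hw w) => /implyP/(_ wX); rewrite eirr.
rewrite eqxx andbT; apply/and3P; split.
- by rewrite subUset sub1set wW.
- by apply: clique_add => // x xX; move: (hw x) => /implyP/(_ xX).
- by rewrite cardsU1 nwX cardX.
Qed.

Lemma Ck_through u v k : e u v ->
  #|Ck ([set w | e u w] :&: [set w | e v w]) k| <= cliques_through e k.+2 u v.
Proof.
move=> euv.
set W := _ :&: _.
have uW : u \notin W by rewrite !inE eirr.
have vW : v \notin W by rewrite !inE eirr andbF.
have nuv : u != v by apply/eqP => h; move: euv; rewrite h eirr.
set f := fun X : {set T} => u |: (v |: X).
have finj : {in Ck W k &, injective f}.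
  move=> X1 X2; rewrite !inE => /and3P [s1 _ _] /and3P [s2 _ _] eq12.
  have nv1 : v \notin X1 by apply: contra vW; apply: (subsetP s1).
  have nv2 : v \notin X2 by apply: contra vW; apply: (subsetP s2).
  have nu1 : u \notin v |: X1.
    by rewrite in_setU1 negb_or nuv /=; apply: contra uW; apply: (subsetP s1).
  have nu2 : u \notin v |: X2.
    by rewrite in_setU1 negb_or nuv /=; apply: contra uW; apply: (subsetP s2).
  move: eq12; rewrite /f => /(congr1 (fun Y => Y :\ u :\ v)) /=; by rewrite (setU1K nu1) (setU1K nu2) (setU1K nv1) (setU1K nv2).
rewrite /cliques_through -(card_in_imset finj); apply: subset_leq_card.
apply/subsetP => Y /imsetP [X]; rewrite !inE => /and3P [sX cX /eqP cardX] ->.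
have nvX : v \notin X by apply: contra vW; apply: (subsetP sX).
have nuX : u \notin v |: X.
  by rewrite in_setU1 negb_or nuv /=; apply: contra uW; apply: (subsetP sX).
rewrite /f setU11 in_setU1 setU11 orbT !andbT; apply/andP; split.
- apply: clique_add.
  + apply: clique_add => // x xX.
    by move: (subsetP sX x xX); rewrite !inE => /andP [? ?]; rewrite esym.
  + move=> x /setU1P [->|xX]; first by rewrite esym.
    by move: (subsetP sX x xX); rewrite !inE => /andP [? ?]; rewrite esym.
- by rewrite cardsU1 nuX cardsU1 nvX cardX.
Qed.


Definition dS (S : {set T}) w := #|[set z in S | e z w]|.
Definition cc x y := #|[set w | e x w] :&: [set w | e y w]|.

Lemma sum_dS (S : {set T}) : \sum_w dS S w = \sum_(z in S) deg e z.
Proof.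
rewrite /dS (eq_bigr (fun w => \sum_(z in S) (e z w : nat))); last by move=> w _; rewrite sum_ind.
rewrite exchange_big; apply: eq_bigr => z _.
by rewrite /deg cardEsum; apply: eq_bigr => w _; rewrite inE.
Qed.

Lemma sum_dS2 (S : {set T}) :
  \sum_w dS S w ^ 2 = \sum_(z in S) \sum_(z' in S) cc z z'.
Proof.
rewrite (eq_bigr (fun w => \sum_(z in S) \sum_(z' in S) (e z w * e z' w))); last first.
  move=> w _; rewrite /dS -sum_ind expnS expn1.
  by rewrite big_distrlr.
rewrite exchange_big; apply: eq_bigr => z _.
rewrite exchange_big; apply: eq_bigr => z' _.
by rewrite /cc cardEsum; apply: eq_bigr => w _; rewrite !inE mulnb.
Qed.

Lemma pair_bound (S : {set T}) : 1 < #|S| ->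
  exists x y, [/\ x \in S, y \in S, x != y &
    \sum_w dS S w ^ 2 <= #|S| * ((#|S| - 1) * cc x y) + \sum_w dS S w].
Proof.
move=> S2.
pose A := [pred p : T * T | [&& p.1 \in S, p.2 \in S & p.1 != p.2]].
have A0 : 0 < #|A|.
  case/card_gt1P: S2 => x [y [xS yS nxy]].
  by apply/card_gt0P; exists (x, y); rewrite inE /= xS yS nxy.
case: (eq_bigmax_cond (fun p => cc p.1 p.2) A0) => [[x y]]; rewrite inE /= => /and3P [xS yS nxy] hM.
exists x, y; split => //.
rewrite sum_dS2 sum_dS -sum_nat_const -big_split leq_sum // => z zS.
rewrite (bigD1 z) //= addnC leq_add //; last by rewrite /cc setIid.
rewrite -hM (cardsD1 z S) zS add1n /= subSS subn0 -sum_nat_const.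
rewrite [X in _ <= X](eq_bigl (fun z' => (z' \in S) && (z' != z))); last first.
  by move=> z'; rewrite !inE andbC.
apply: leq_sum => z' /andP [z'S nz'].
by apply: (@leq_bigmax_cond _ A (fun p => cc p.1 p.2) (z, z')); rewrite /= zS z'S eq_sym nz'.
Qed.

End Comb.

Local Open Scope ring_scope.

Lemma arith (r n dl m : nat) (c : nat -> nat) :
  (3 <= r)%N -> (0 < n)%N ->
  (dl%:R : rat) > ((r%:R - 1) / r%:R - 1 / (r%:R ^+ 2 * (r%:R ^+ 2 - 1))) * n%:R ->
  (r%:R * (r%:R + 1) * m%:R : rat) >= 2 * (r%:R - 1) * (r%:R + 1) * dl%:R - r%:R * (r%:R - 1) * n%:R ->
  (forall k, ((k.+1)%:R * (c k.+1)%:R : rat) >= (c k)%:R * (m%:R - k%:R * (n%:R - dl%:R))) ->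
  (0 < c 0)%N ->
  ((c (r - 1)%N)%:R : rat) > n%:R ^+ (r - 1) / r%:R ^+ (r + 3).
Proof.
move=> r3 n0 H1 H2 Hc c0.
set R : rat := r%:R; set N : rat := n%:R; set D : rat := dl%:R; set M : rat := m%:R.
have R3 : 3 <= R by rewrite /R (ler_nat _ 3).
have N0 : 0 < N by rewrite /R ltr0n.
have R0 : R != 0 by apply/eqP => h; rewrite h in R3; lra.
have R1 : R ^+ 2 - 1 != 0 by apply/eqP => h; nra.
have R1p : 0 < R ^+ 2 - 1 by nra.
set q := R ^+ 2 * (R ^+ 2 - 1).
have q0 : 0 < q by rewrite /q; apply: mulr_gt0 => //; nra.
set tt := R^-1 + q^-1.
have hA : N - D <= tt * N.
  have e1 : (R - 1) / R - 1 / q = 1 - tt by rewrite /tt /q; field; rewrite ?R0 ?R1.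
  rewrite e1 in H1; lra.
set P := (R - 1) * (R + 2) / (R * (R + 1)).
set Q := 2 * (R - 1) / R.
have hM : P * N - Q * (N - D) <= M.
  have -> : P * N - Q * (N - D) =
     (2 * (R - 1) * (R + 1) * D - R * (R - 1) * N) / (R * (R + 1)).
    rewrite /P /Q; field; apply/andP; split => //; apply/eqP => h; lra.
  rewrite ler_pdivrMr; last by nra.
  rewrite mulrC; lra.
set cr := (R ^+ 2 - 2 * R + 2) / (R ^+ 3 * (R ^+ 2 - 1)).
have cr0 : 0 < cr.
  rewrite /cr; apply: divr_gt0; first nra.
  apply: mulr_gt0 => //; apply: exprn_gt0; lra.
have hB : forall k : nat, (k <= r - 2)%N ->
    cr * N + (R - 2 - k%:R) * N / R <= M - k%:R * (N - D).
  move=> k kr.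
  have K0 : 0 <= k%:R :> rat by [].
  have Kr : k%:R <= R - 2.
    have : (k + 2 <= r)%N by rewrite -(subnK (ltnW r3)) leq_add2r.
    by rewrite -(ler_nat rat) natrD -/R => h; lra.
  have QK : 0 <= Q + k%:R.
    rewrite /Q; apply: addr_ge0 => //; apply: divr_ge0; lra.
  have h1 : (Q + k%:R) * (N - D) <= (Q + k%:R) * (tt * N) by apply: ler_wpM2l.
  have id1 : P - (Q + k%:R) * tt = cr + (R - 2 - k%:R) / R + (R - 2 - k%:R) / q.
    rewrite /P /Q /tt /cr /q; field.
    apply/and3P; split => //; apply/eqP => h; lra.
  have h2 : 0 <= (R - 2 - k%:R) / q * N.
    apply: mulr_ge0; last lra; apply: divr_ge0; lra.
  have h3 : (P - (Q + k%:R) * tt) * N = cr * N + (R - 2 - k%:R) * N / R + (R - 2 - k%:R) / q * N.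
    by rewrite id1; field; rewrite (gt_eqF q0) R0.
  have h4 : (Q + k%:R) * (N - D) = Q * (N - D) + k%:R * (N - D) by ring.
  have h5 : (P - (Q + k%:R) * tt) * N = P * N - (Q + k%:R) * (tt * N) by ring.
  lra.
have NR0 : 0 < N / R by apply: divr_gt0 => //; (lra).
have hind : forall k, (k <= r - 2)%N -> 'C(r - 2, k)%:R * (N / R) ^+ k <= (c k)%:R.
  elim => [_|k IH kr].
    by rewrite bin0 expr0 mulr1 ler1n.
  have kr' : (k <= r - 2)%N by apply: ltnW.
  have IHk := IH kr'.
  have hb := hB k kr'.
  have Kr : k%:R + 1 <= R - 2.
    have : (k.+1 + 2 <= r)%N by (clear - kr; lia).
    by rewrite -(ler_nat rat) natrD -/R -addn1 natrD => h; (lra).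
  have Ck0 : 0 <= 'C(r - 2, k)%:R * (N / R) ^+ k.
    by apply: mulr_ge0 => //; apply: exprn_ge0; (lra).
  have Rk : 0 <= (R - 2 - k%:R) * N / R.
    apply: divr_ge0; last (lra); apply: mulr_ge0; (lra).
  have step : 'C(r - 2, k)%:R * (N / R) ^+ k * ((R - 2 - k%:R) * N / R)
      <= (c k)%:R * (M - k%:R * (N - D)).
    apply: ler_pM => //.
    have : 0 <= cr * N by apply: mulr_ge0; (lra).
    by move=> h; apply: le_trans hb; rewrite lerDr.
  have bineq : (k.+1)%:R * 'C(r - 2, k.+1)%:R = 'C(r - 2, k)%:R * (R - 2 - k%:R) :> rat.
    have r2 : (2 <= r)%N by apply: ltnW.
    by rewrite -natrM mul_bin_left natrM mulrC (natrB _ kr') (natrB _ r2).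
  have eq1 : (k.+1)%:R * ('C(r - 2, k.+1)%:R * (N / R) ^+ k.+1)
      = 'C(r - 2, k)%:R * (N / R) ^+ k * ((R - 2 - k%:R) * N / R).
    by rewrite exprSr [LHS]mulrA bineq; (field).
  have := le_trans step (Hc k); rewrite -eq1 => h.
  have K1 : 0 < (k.+1)%:R :> rat by rewrite ltr0n.
  by rewrite -(ler_pM2l K1).
have r1 : (r - 1 = (r - 2).+1)%N by clear - r3; (lia).
have r5 : (r + 3 = (r - 2) + 5)%N by clear - r3; (lia).
set X := (N / R) ^+ (r - 2).
have X0 : 0 < X by apply: exprn_gt0.
have hi := hind (r - 2)%N (leqnn _); rewrite binn mulr1n mul1r -/X in hi.
have hb := hB (r - 2)%N (leqnn _).
rewrite (natrB _ (ltnW r3)) -/R in hb.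
have hc := Hc (r - 2)%N.
rewrite -r1 in hc.
have e1 : ((r - 1)%N%:R : rat) = R - 1 by rewrite natrB // ltnW // ltnW.
rewrite e1 in hc.
have Mpos : cr * N <= M - (R - 2) * (N - D) by (lra).
have h1 : X * (cr * N) <= (R - 1) * (c (r - 1)%N)%:R.
  apply: le_trans hc; apply: ler_pM => //; [exact: ltW | apply: mulr_ge0; lra | rewrite natrB ?(ltnW r3) //; exact: Mpos].
have eqg : N ^+ (r - 1) / R ^+ (r + 3) = X * N / R ^+ 5.
  rewrite /X r1 r5 exprSr exprD expr_div_n; (field).
  by rewrite R0 expf_neq0.
rewrite eqg.
have hk : (R - 1) / R ^+ 5 < cr.
  rewrite -subr_gt0.
  have -> : cr - (R - 1) / R ^+ 5 =
      (R ^+ 2 * (R ^+ 2 - 2 * R + 2) - (R - 1) * (R ^+ 2 - 1)) / (R ^+ 5 * (R ^+ 2 - 1)).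
    by rewrite /cr; (field); rewrite R0 R1.
  apply: divr_gt0; last by apply: mulr_gt0 => //; apply: exprn_gt0; (lra).
  have : 0 <= R ^+ 3 * (R - 3) by apply: mulr_ge0; [apply: exprn_ge0; (lra) | (lra)].
  move=> h.
  have -> : R ^+ 2 * (R ^+ 2 - 2 * R + 2) - (R - 1) * (R ^+ 2 - 1) = R ^+ 3 * (R - 3) + (3 * R ^+ 2 + R - 1) by ring.
  have : 0 <= R ^+ 2 by apply: sqr_ge0.
  (lra).
have Y0 : 0 < X * N by apply: mulr_gt0.
have h2 : X * N * ((R - 1) / R ^+ 5) < X * N * cr by rewrite ltr_pM2l.
have h3 : X * N / R ^+ 5 * (R - 1) = X * N * ((R - 1) / R ^+ 5) by rewrite mulrA mulrAC.
have R1' : 0 < R - 1 by (lra).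
rewrite -(ltr_pM2r R1') h3.
have : X * N * cr = X * (cr * N) by ring.
(lra).
Qed.

Lemma quad_nat (d r : nat) : ((2 * r - 1) * d <= d ^ 2 + r * (r - 1))%N.
Proof. case: (leqP r d) => h; nia. Qed.

Theorem lemma5 (r : nat) (T : finType) (e : rel T) :
  (3 <= r)%N ->
  simple_graph e ->
  has_clique e r.+1 ->
  ((min_degree e)%:R : rat) >
    ((r%:R - 1) / r%:R - 1 / (r%:R ^+ 2 * (r%:R ^+ 2 - 1))) * (#|T|)%:R ->
  ((js2 e r.+1)%:R : rat) > (#|T|)%:R ^+ (r - 1) / r%:R ^+ (r + 3).
Proof.
move=> r3 [esym eirr] [S [cS cardS]] Hdeg.
have S2 : (1 < #|S|)%N by rewrite cardS ltnS ltnW // ltnW.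
have n0 : (0 < #|T|)%N by apply: leq_trans (max_card S); rewrite cardS.
have [x [y [xS yS nxy hP]]] := pair_bound e S2.
have exy : e x y := clique_edge cS xS yS nxy.
set W := [set w | e x w] :&: [set w | e y w].
set c := fun k => #|Ck e W k|.
have dln : (min_degree e <= #|T|)%N by apply: leq_trans (deg_min e x) (deg_le e x).
apply: (lt_le_trans (arith (m := #|W|) (c := c) r3 n0 Hdeg _ _ _)); last first.
- rewrite ler_nat /c.
  have -> : r.+1 = ((r - 1).+2)%N by clear - r3; lia.
  apply: leq_trans (@Ck_through T e esym eirr x y (r - 1)%N exy) _.
  exact: (@leq_bigmax_cond _ (fun p : T * T => e p.1 p.2) (fun p => cliques_through e (r - 1)%N.+2 p.1 p.2) (x, y)).
- rewrite /c; apply/card_gt0P; exists set0; rewrite inE sub0set cards0 /= andbT.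
  by apply/forallP => z; rewrite inE.
- move=> k; rewrite /c.
  have hs := Ck_step esym eirr W k.
  have hX : forall X, X \in Ck e W k ->
      ((#|W|)%:R - k%:R * ((#|T|)%:R - (min_degree e)%:R) : rat) <= (#|cn e X W|)%:R.
    move=> X; rewrite inE => /and3P [sX cX /eqP cardX].
    have h : (#|W| <= #|cn e X W| + k * (#|T| - min_degree e))%N.
      apply: leq_trans (cn_bound e W X) _; rewrite leq_add2l -cardX -sum_nat_const.
      by apply: leq_sum => z _; apply: leq_sub2l; apply: deg_min.
    move: h; rewrite -(ler_nat rat) natrD natrM natrB // => h; lra.
  set a := (_ - _ : rat).
  have -> : (#|Ck e W k|)%:R * a = \sum_(X in Ck e W k) a by rewrite sumr_const mulr_natl.
  apply: le_trans (ler_sum _ hX) _.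
  by rewrite -natr_sum -natrM ler_nat.
- set D1 := \sum_w dS e S w.
  set D2 := (\sum_w dS e S w ^ 2)%N.
  rewrite cardS subSS subn0 -/D1 -/D2 in hP.
  have hq : ((2 * r - 1) * D1 <= D2 + #|T| * (r * (r - 1)))%N.
    rewrite /D1 /D2 big_distrr /= -sum_nat_const -big_split /=.
    by apply: leq_sum => w _; apply: quad_nat.
  have hD1 : (r.+1 * min_degree e <= D1)%N.
    rewrite /D1 sum_dS -cardS -sum_nat_const; apply: leq_sum => z _; exact: deg_min.
  have h4 : (2 * (r - 1) * (r.+1 * min_degree e) <= 2 * (r - 1) * D1)%N by apply: leq_mul.
  have r1 : (1 <= r)%N by apply: leq_trans r3.
  have r21 : (1 <= 2 * r)%N by rewrite muln_gt0.
  change (cc e x y) with #|W| in hP.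
  move: hP hq h4; rewrite -!(ler_nat rat) !natrD !natrM !(natrB _ r1) (natrB _ r21) natrM.
  move=> hP hq h4; lra.
Qed.
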